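(* For any traversal sequence $\tau$, distance metric $d$, and sequence of tasks $w^1,\ldots,w^n$, let $C^{A2}=w^{A2}+d^{A2}$ be the total cost (processing cost plus transition cost) of the ''follow the traversal'' algorithm, and $C^T=w^T+d^T$ the total cost (processing cost plus transition cost) of the fractional traversal algorithm on that sequence of tasks. Then $C^{A2}\leq 2\cdot C^T$.
   Context: Setting: a metrical task system with state set $S=\{1,\ldots,m\}$ and a symmetric nonnegative distance $d$ on $S$ with $d_{ss}=0$ satisfying the triangle inequality. A task is a vector $w=(w_1,\ldots,w_m)$ of nonnegative reals; $w_s$ is the cost of processing the task in state $s$. A traversal sequence $\tau=\tau_1,\tau_2,\ldots$ is an infinite sequence of states (states may repeat). The traversal distance between indices $\ell,\ell'$ is $\delta_{\ell,\ell'}=\delta_{\ell',\ell}=\sum_{j=\min(\ell,\ell')}^{\max(\ell,\ell')-1} d_{\tau_j,\tau_{j+1}}$. Fractional traversal algorithm (Borodin–Linial–Saks): it keeps a current index $j$ in $\tau$ (starting at $t_0=1$) and the work $\rho_j$ expended at position $j$ since arriving there. On task $w^i$ it processes fractions of the task in state $\tau_j$; whenever the work done at position $j$ reaches $d_{\tau_j,\tau_{j+1}}$ it moves to position $j+1$ (paying $d_{\tau_j,\tau_{j+1}}$) and resets $\rho$ to $0$, continuing until the whole task is done. Let $t_i$ be its index after task $i$, and $\lambda^i_j$ the fraction of task $i$ processed at position $j$ ($\sum_j\lambda^i_j=1$). Its cost on task $i$ is $\delta_{t_{i-1},t_i}+\sum_{j=t_{i-1}}^{t_i}\lambda^i_j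 w^i_{\tau_j}$. ''Follow the traversal'' algorithm: it keeps an index $\ell_{i-1}$ in $\tau$ ($\ell_0=1$) and simulates the fractional traversal algorithm (index $t_{i-1}$). On task $w^i$, let $j_{\min}=\min(\ell_{i-1},t_{i-1})$, $j_{\max}=\max(\ell_{i-1},t_{i-1})$, and define $\tilde c(j)=w^i_{\tau_j}$ if $j_{\min}\le j\le j_{\max}$, $\tilde c(j)=w^i_{\tau_j}+\delta_{j_{\max},j}$ if $j>j_{\max}$, and $\tilde c(j)=\infty$ otherwise. It sets $\ell_i\in\arg\min_{j\ge j_{\min}}\tilde c(j)$ (ties broken arbitrarily), moves from state $\tau_{\ell_{i-1}}$ to state $\tau_{\ell_i}$ (paying $d_{\tau_{\ell_{i-1}},\tau_{\ell_i}}$) and processes the whole task there (paying $w^i_{\tau_{\ell_i}}$). *)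

(* Defs.v *)
From mathcomp Require Import all_boot all_order all_algebra.
Set Implicit Arguments. Unset Strict Implicit. Unset Printing Implicit Defensive.
Import Order.TTheory GRing.Theory Num.Theory.
Local Open Scope ring_scope.

Section MTS.
Variable R : realFieldType.
Variable m : nat.
(* states S = 'I_m, distance d, traversal sequence tau (indices start at 1;
   tau 0 is never used) *)
Variable d : 'I_m -> 'I_m -> R.
Variable tau : nat -> 'I_m.

Definition dstep (j : nat) : R := d (tau j) (tau j.+1).

Definition tdist (l l' : nat) : R :=
  \sum_(minn l l' <= j < maxn l l') dstep j.

Definition metric : Prop :=
  [/\ forall s t, 0 <= d s t,
      forall s, d s s = 0,
      forall s t, d s t = d t s &
      forall s t u, d s u <= d s t + d t u].

(* Fractional traversal algorithm processing ONE task x.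
   ft_task x j rho f j' rho' c : starting at index j with work rho already
   expended at j and a remaining fraction f of task x, the algorithm ends at
   index j' with work rho' expended there, paying total cost c (moving costs
   + processing costs). *)
Inductive ft_task (x : 'I_m -> R) : nat -> R -> R -> nat -> R -> R -> Prop :=
| ft_done j rho :
    rho < dstep j -> ft_task x j rho 0 j rho 0
| ft_move j rho f j' rho' c :
    rho = dstep j ->
    ft_task x j.+1 0 f j' rho' c ->
    ft_task x j rho f j' rho' (dstep j + c)
| ft_all j rho f j' rho' c :
    rho < dstep j -> 0 < f -> rho + f * x (tau j) <= dstep j ->
    ft_task x j (rho + f * x (tau j)) 0 j' rho' c ->
    ft_task x j rho f j' rho' (f * x (tau j) + c)
| ft_part j rho f j' rho' c :
    rho < dstep j -> 0 < f -> dstep j < rho + f * x (tau j) ->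
    ft_task x j (dstep j) (f - (dstep j - rho) / x (tau j)) j' rho' c ->
    ft_task x j rho f j' rho' (dstep j - rho + c).

Definition ctil (x : 'I_m -> R) (jmax j : nat) : R :=
  if (j <= jmax)%N then x (tau j) else x (tau j) + tdist jmax j.

Definition follow_choice (x : 'I_m -> R) (l t l' : nat) : Prop :=
  (minn l t <= l')%N /\
  forall j, (minn l t <= j)%N -> ctil x (maxn l t) l' <= ctil x (maxn l t) j.

(* joint run of both algorithms on a sequence of tasks:
   run ws l t rho CA CT : starting with follow-the-traversal at index l and the
   fractional algorithm at index t with work rho, processing the tasks ws gives
   total cost CA for follow-the-traversal and CT for the fractional algorithm. *)
Inductive run : seq {ffun 'I_m -> R} -> nat -> nat -> R -> R -> R -> Prop :=
| run_nil l t rho : run [::] l t rho 0 0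
| run_cons (x : {ffun 'I_m -> R}) ws l t rho l' t' rho' cT CA CT :
    ft_task x t rho 1 t' rho' cT ->
    follow_choice x l t l' ->
    run ws l' t' rho' CA CT ->
    run (x :: ws) l t rho (d (tau l) (tau l') + x (tau l') + CA) (cT + CT).

End MTS.

(* Main.v *)
Require Import Defs.
From mathcomp Require Import all_boot all_order all_algebra.
From mathcomp Require Import lra zify.
Import Order.TTheory GRing.Theory Num.Theory.
Local Open Scope ring_scope.

Section Proofs.
Variable R : realFieldType.
Variable m : nat.
Variable d : 'I_m -> 'I_m -> R.
Variable tau : nat -> 'I_m.
Hypothesis hd : metric d.

Definition P (j : nat) : R := \sum_(0 <= i < j) dstep d tau i.

Lemma dstep_ge0 j : 0 <= dstep d tau j.
Proof. by case: hd => h _ _ _; apply: h. Qed.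

Lemma PS j : P j.+1 = P j + dstep d tau j.
Proof. by rewrite /P big_nat_recr. Qed.

Lemma P_mono a b : (a <= b)%N -> P a <= P b.
Proof.
move=> /subnK <-; elim: (b - a)%N => [|k IH]; first by rewrite add0n.
rewrite addSn PS; have := dstep_ge0 (k + a); lra.
Qed.

Lemma tdistE a b : tdist d tau a b = P (maxn a b) - P (minn a b).
Proof.
rewrite /tdist /P (@big_cat_nat _ _ _ (minn a b) 0 (maxn a b)) //=.
  lra.
by rewrite geq_min leq_max leqnn.
Qed.

Lemma tdist_le a b : (a <= b)%N -> tdist d tau a b = P b - P a.
Proof. by move=> h; rewrite tdistE (maxn_idPr h) (minn_idPl h). Qed.

Lemma tdist_ge a b : (b <= a)%N -> tdist d tau a b = P a - P b.
Proof. by move=> h; rewrite tdistE (maxn_idPl h) (minn_idPr h). Qed.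

Lemma d_le a b : (a <= b)%N -> d (tau a) (tau b) <= P b - P a.
Proof.
case: hd => h0 hr hs ht.
move=> /subnK <-; elim: (b - a)%N => [|k IH]; first by rewrite add0n hr; lra.
rewrite addSn PS; have := ht (tau a) (tau (k + a)) (tau (k + a).+1).
rewrite /dstep in IH *; lra.
Qed.

Lemma d_le' a b : d (tau a) (tau b) <= tdist d tau a b.
Proof.
case: hd => h0 hr hs ht.
case: (leqP a b) => h.
  by rewrite tdist_le //; apply: d_le.
by rewrite tdist_ge ?(ltnW h) // hs; apply: d_le; apply: ltnW.
Qed.

Lemma ft_lemma (x : 'I_m -> R) j rho f j' rho' c :
  (forall s, 0 <= x s) ->
  ft_task d tau x j rho f j' rho' c -> 0 <= f ->
  (j <= j')%N /\ exists j0, [/\ (j <= j0)%N, (j0 <= j')%N &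
     f * x (tau j0) <= c - (P j' - P j)].
Proof.
move=> hx; elim.
- move=> j1 rho1 _ _; split => //; exists j1; split => //; lra.
- move=> j1 rho1 f1 j1' rho1' c1 _ _ IH hf.
  have [hj [j0 [h1 h2 h3]]] := IH hf.
  split; first exact: ltnW.
  exists j0; split => //; first exact: ltnW.
  move: h3; rewrite PS; lra.
- move=> j1 rho1 f1 j1' rho1' c1 _ _ _ _ IH hf.
  have [hj [j0 [h1 h2 h3]]] := IH (lexx 0).
  split => //; exists j1; split => //; move: h3; lra.
- move=> j1 rho1 f1 j1' rho1' c1 hlt hf0 hgt _ IH hf.
  set y := x (tau j1) in hgt IH *.
  have hy : 0 < y.
    rewrite lt_neqAle hx andbT; apply/eqP => hy0.
    by move: hgt; rewrite -hy0 mulr0 addr0 => /(lt_trans hlt); rewrite ltxx.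
  set lam := (dstep d tau j1 - rho1) / y in IH *.
  have hlamy : lam * y = dstep d tau j1 - rho1 by rewrite /lam divfK // gt_eqF.
  have hlam0 : 0 <= lam by rewrite /lam divr_ge0 //; [lra | exact: ltW].
  have hlf : lam <= f1.
    rewrite /lam ler_pdivrMr //; lra.
  have [hj [j0 [h1 h2 h3]]] := IH (ltac:(by rewrite subr_ge0)).
  split => //.
  have hx0 := hx (tau j0).
  case: (leP (x (tau j0)) y) => hc.
  + exists j0; split => //.
    have : lam * x (tau j0) <= lam * y by apply: ler_wpM2l.
    move: h3; rewrite mulrBl; lra.
  + exists j1; split => //.
    have : (f1 - lam) * y <= (f1 - lam) * x (tau j0)
      by apply: ler_wpM2l; [lra | exact: ltW].
    move: h3; rewrite !mulrBl; rewrite -/y; lra.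
Qed.


Lemma ord2 u v : ((u <= v)%N /\ P u <= P v) \/ ((v < u)%N /\ P v <= P u).
Proof.
case: (leqP u v) => h; [left | right]; split => //; apply: P_mono => //.
exact: ltnW.
Qed.

Ltac natlia :=
  repeat match goal with H : ?T |- _ =>
    lazymatch T with is_true (leq _ _) => fail | _ => clear H end end; lia.

Ltac rw_tdist :=
  repeat match goal with
  | |- context [tdist d tau ?a ?b] =>
      (rewrite (@tdist_le a b); [|natlia]) || (rewrite (@tdist_ge a b); [|natlia])
  end.

Ltac pf h := first [have := @P_mono _ _ (ltnW h) | have := @P_mono _ _ h]; move=> ?.

Lemma step (x : 'I_m -> R) l t l' t' cT :
  (forall s, 0 <= x s) -> (t <= t')%N ->
  (exists j0, [/\ (t <= j0)%N, (j0 <= t')%N & x (tau j0) <= cT - (P t' - P t)]) ->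
  follow_choice d tau x l t l' ->
  d (tau l) (tau l') + x (tau l') + tdist d tau l' t' <= 2 * cT + tdist d tau l t.
Proof.
move=> hx htt [j0 [h1 h2 h3]] [hmin hc].
have hC := hc j0 (leq_trans (geq_minr l t) h1).
have hdl := d_le' l l'.
have hxl := hx (tau l'). have hxj := hx (tau j0).
pf h1; pf h2; pf htt.
move: hmin hC hdl h3; rewrite /ctil.
case: (leqP l t) => hlt hmin; pf hlt; pf hmin.
  case: (leqP l' t) => a1; case: (leqP j0 t) => a2;
  case: (leqP l' t') => b2; pf a1; pf a2; pf b2;
  (try (exfalso; natlia)); rw_tdist; lra.
case: (leqP l' l) => a1; case: (leqP j0 l) => a2;
case: (leqP l' t') => b2; case: (leqP l t') => b3;
pf a1; pf a2; pf b2; pf b3;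
(try (exfalso; natlia)); rw_tdist; lra.
Qed.

Lemma tdist_ge0 a b : 0 <= tdist d tau a b.
Proof.
rewrite tdistE; have := @P_mono (minn a b) (maxn a b).
rewrite geq_min leq_max leqnn /=; move=> /(_ isT); lra.
Qed.

Lemma run_bound ws l t rho CA CT :
  run d tau ws l t rho CA CT ->
  (forall x, x \in ws -> forall s, 0 <= x s) ->
  CA <= 2 * CT + tdist d tau l t.
Proof.
elim => [l1 t1 rho1 _ | x ws1 l1 t1 rho1 l1' t1' rho1' cT CA1 CT1 hft hfc _ IH hws].
  have := tdist_ge0 l1 t1; lra.
have hx : forall s, 0 <= x s by apply: hws; rewrite inE eqxx.
have IH' := IH (fun y hy => hws y (ltac:(by rewrite inE hy orbT))).
have [htt [j0 [h1 h2 h3]]] := ft_lemma _ _ _ _ _ _ _ hx hft ler01.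
rewrite mul1r in h3.
have hex : exists j0, [/\ (t1 <= j0)%N, (j0 <= t1')%N & x (tau j0) <= cT - (P t1' - P t1)] by exists j0.
have := step _ _ _ _ _ _ hx htt hex hfc.
lra.
Qed.

End Proofs.

Theorem theorem3 (R : realFieldType) (m : nat) (d : 'I_m -> 'I_m -> R)
  (tau : nat -> 'I_m) (ws : seq {ffun 'I_m -> R}) (CA CT : R) :
  metric d ->
  (forall x, x \in ws -> forall s, 0 <= x s) ->
  run d tau ws 1 1 0 CA CT ->
  CA <= 2 * CT.
Proof.
move=> hd hws hrun.
have := @run_bound R m d tau hd _ _ _ _ _ _ hrun hws.
have -> : tdist d tau 1 1 = 0 by rewrite /tdist maxnn minnn big_geq.
lra.
Qed.
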